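(* Let $A<0<B$ be integers and let $\mu\in\mathcal M_0(\mathbb Z)$ satisfy $\mu([A,B])=1$, $\mu(\{A\})>0$, $\mu(\{B\})>0$. Let $$\mathcal R_\mu=\{\mathbf r\in[0,1]^{\mathbb Z}: r_i=1\text{ for } i\notin(A,B),\ \text{and } \mathbb P(S_{\tau(\mathbf r)}=i)\le\mu(\{i\})\text{ for } i\in(A,B)\}.$$ Then $\mathcal R_\mu$ has a maximal element $\mathbf r^{\max}$, i.e. $r^{\max}_i\ge r_i$ for all $i\in\mathbb Z$ and all $\mathbf r\in\mathcal R_\mu$, and $\tau(\mathbf r^{\max})\in\mathrm{SEP}(\mathbb F^{S,\boldsymbol\xi},\mu)$; that is, $S_{\tau(\mathbf r^{\max})}\sim\mu$ and $(S_{t\wedge\tau(\mathbf r^{\max})})_{t\ge0}$ is uniformly integrable.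
   Context: $S=(S_t)_{t\ge0}$ is a simple symmetric random walk on $\mathbb Z$ with $S_0=0$ (discrete time). $\mathcal M_0(\mathbb Z)$ is the set of probability measures on $\mathbb Z$ with finite first moment and mean zero. For $\mathbf r=(r_x)_{x\in\mathbb Z}\in[0,1]^{\mathbb Z}$, let $\boldsymbol\xi=\{\xi_{t,x}\}_{t\ge0,x\in\mathbb Z}$ be Bernoulli random variables, mutually independent and independent of $S$, with $\mathbb P(\xi_{t,x}=0)=r_x=1-\mathbb P(\xi_{t,x}=1)$, and $\tau(\mathbf r):=\inf\{t\ge0:\xi_{t,S_t}=0\}$, a stopping time for $\mathbb F^{S,\boldsymbol\xi}$, $\mathcal F^{S,\boldsymbol\xi}_t:=\sigma(S_u,\xi_{u,S_u}:u\le t)$. $\mathrm{SEP}(\mathbb F,\mu)$ is the set of $\mathbb F$-stopping times $\tau$ with $S_\tau\sim\mu$ such that $(S_{t\wedge\tau})_{t\ge0}$ is uniformly integrable. *)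

(* Defs.v *)
From Stdlib Require Import Reals ZArith Lra Lia.
Open Scope R_scope.

Definition Zsum_from (f : Z -> R) (a : Z) (n : nat) : R :=
  sum_f_R0 (fun k => f (a + Z.of_nat k)%Z) n.

Definition Zsum_range (f : Z -> R) (a b : Z) : R :=
  Zsum_from f a (Z.to_nat (b - a)).

(* series over Z, summed symmetrically: f 0 + (f 1 + f (-1)) + ... *)
Definition Zterm (f : Z -> R) (n : nat) : R :=
  match n with
  | O => f 0%Z
  | S m => f (Z.of_nat (S m)) + f (- Z.of_nat (S m))%Z
  end.
Definition Z_sum_to (f : Z -> R) (l : R) : Prop := infinite_sum (Zterm f) l.

Definition M0 (mu : Z -> R) : Prop :=
  (forall i, 0 <= mu i) /\
  Z_sum_to mu 1 /\
  (exists m, Z_sum_to (fun i => Rabs (IZR i) * mu i) m) /\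
  Z_sum_to (fun i => IZR i * mu i) 0.

(** For r : Z -> [0,1], with S the SSRW from 0
    and xi_{t,x} independent Bernoulli with P(xi_{t,x}=0) = r x, and
    tau(r) = inf{t : xi_{t,S_t} = 0}:
      pre r t i  = P(tau(r) >= t, S_t = i)
      stopped r t i = P(tau(r) = t, S_t = i) = pre r t i * r i. *)
Fixpoint pre (r : Z -> R) (t : nat) : Z -> R :=
  match t with
  | O => fun i => if Z.eq_dec i 0 then 1 else 0
  | S t' => fun i =>
      / 2 * (pre r t' (i - 1)%Z * (1 - r (i - 1)%Z)
           + pre r t' (i + 1)%Z * (1 - r (i + 1)%Z))
  end.

Definition stopped (r : Z -> R) (t : nat) (i : Z) : R := pre r t i * r i.

(* P(S_{t /\ tau(r)} = i) *)
Definition stopped_proc_law (r : Z -> R) (t : nat) (i : Z) : R :=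
  sum_f_R0 (fun s => if (s <? t)%nat then stopped r s i else 0) t + pre r t i.

(* P(S_{tau(r)} = i) <= p   (the series of P(tau = t, S_t = i) has sum <= p) *)
Definition hit_prob_le (r : Z -> R) (i : Z) (p : R) : Prop :=
  forall N, sum_f_R0 (fun t => stopped r t i) N <= p.

(* P(S_{tau(r)} = i) = p *)
Definition hit_prob_eq (r : Z -> R) (i : Z) (p : R) : Prop :=
  infinite_sum (fun t => stopped r t i) p.

(* (S_{t /\ tau(r)})_t is uniformly integrable:
   lim_{K -> oo} sup_t E[|X_t| 1_{|X_t| >= K}] = 0.
   Since |S_{t /\ tau}| <= t, the expectation is a finite sum over [-t, t]. *)
Definition stopped_UI (r : Z -> R) : Prop :=
  forall eps, 0 < eps -> exists K : R, forall t : nat,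
    Zsum_range (fun i => if Rle_dec K (Rabs (IZR i))
                         then Rabs (IZR i) * stopped_proc_law r t i else 0)
               (- Z.of_nat t)%Z (Z.of_nat t) <= eps.

(* S_{tau(r)} ~ mu and the stopped process is UI.  (tau(r) is an
   F^{S,xi}-stopping time by construction.) *)
Definition in_SEP (r : Z -> R) (mu : Z -> R) : Prop :=
  (forall i, hit_prob_eq r i (mu i)) /\ stopped_UI r.

Definition in_R_mu (A B : Z) (mu : Z -> R) (r : Z -> R) : Prop :=
  (forall i, 0 <= r i <= 1) /\
  (forall i, (i <= A \/ B <= i)%Z -> r i = 1) /\
  (forall i, (A < i < B)%Z -> hit_prob_le r i (mu i)).

(* Main.v *)
Require Import Defs.
From Stdlib Require Import Reals ZArith.
From Stdlib Require Import Lra Lia Psatz.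
Open Scope R_scope.

Fixpoint zsum (f : Z -> R) (a : Z) (n : nat) : R :=
  match n with O => 0 | S m => zsum f a m + f (a + Z.of_nat m)%Z end.

Lemma zsum_ext_in f g a n : (forall k, (k < n)%nat -> f (a + Z.of_nat k)%Z = g (a + Z.of_nat k)%Z) ->
  zsum f a n = zsum g a n.
Proof. induction n; intros H; simpl; auto. rewrite IHn by (intros; apply H; lia). rewrite H by lia. ring. Qed.

Lemma zsum_zero_in f a n : (forall k, (k < n)%nat -> f (a + Z.of_nat k)%Z = 0) -> zsum f a n = 0.
Proof. induction n; intros H; simpl; auto. rewrite IHn by (intros; apply H; lia). rewrite H by lia. ring. Qed.

Lemma zsum_plus f g a n : zsum (fun j => f j + g j) a n = zsum f a n + zsum g a n.
Proof. induction n; simpl; [ring| rewrite IHn; ring]. Qed.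
Lemma zsum_minus f g a n : zsum (fun j => f j - g j) a n = zsum f a n - zsum g a n.
Proof. induction n; simpl; [ring| rewrite IHn; ring]. Qed.
Lemma zsum_scal c f a n : zsum (fun j => c * f j) a n = c * zsum f a n.
Proof. induction n; simpl; [ring| rewrite IHn; ring]. Qed.
Lemma zsum_nonneg f a n : (forall j, 0 <= f j) -> 0 <= zsum f a n.
Proof. intros H; induction n; simpl; [lra| specialize (H (a + Z.of_nat n)%Z); lra]. Qed.
Lemma zsum_ge_term f a n k : (forall j, 0 <= f j) -> (k < n)%nat -> f (a + Z.of_nat k)%Z <= zsum f a n.
Proof. intros H; induction n; intros Hk; [lia|]. simpl.
 destruct (Nat.eq_dec k n). subst. pose proof (zsum_nonneg f a n H); lra.
 pose proof (IHn ltac:(lia)). specialize (H (a + Z.of_nat n)%Z); lra. Qed.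
Lemma zsum_indic f a n k : (k < n)%nat ->
  zsum (fun j => f j * (if Z.eq_dec j (a + Z.of_nat k)%Z then 1 else 0)) a n = f (a + Z.of_nat k)%Z.
Proof. induction n; intros Hk; [lia|]. simpl.
 destruct (Nat.eq_dec k n). subst.
 rewrite zsum_zero_in. destruct Z.eq_dec; [ring|lia].
 intros k' Hk'. destruct Z.eq_dec; [lia|ring].
 rewrite IHn by lia. destruct Z.eq_dec; [lia|ring]. Qed.
Lemma zsum_split f a n m : zsum f a (n + m) = zsum f a n + zsum f (a + Z.of_nat n)%Z m.
Proof. induction m; simpl. rewrite Nat.add_0_r; ring.
 rewrite Nat.add_succ_r; simpl. rewrite IHm. replace (a + Z.of_nat n + Z.of_nat m)%Z with (a + Z.of_nat (n+m))%Z by lia. ring. Qed.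
Lemma zsum_cons f a m : zsum f a (S m) = f a + zsum f (a+1)%Z m.
Proof. replace (S m) with (1 + m)%nat by lia. rewrite zsum_split. simpl. replace (a+0)%Z with a by lia. ring. Qed.

Lemma zsum_window f a m A n : (a <= A)%Z -> (A + Z.of_nat n <= a + Z.of_nat m)%Z ->
  (forall j, (j < A \/ A + Z.of_nat n <= j)%Z -> f j = 0) ->
  zsum f a m = zsum f A n.
Proof. intros H1 H2 H3.
 set (d := Z.to_nat (A - a)). set (e := (m - d - n)%nat).
 replace m with (d + (n + e))%nat by (unfold d, e; lia).
 rewrite zsum_split, zsum_split.
 rewrite (zsum_zero_in f a d). replace (a + Z.of_nat d)%Z with A by (unfold d; lia).
 rewrite (zsum_zero_in f (A + Z.of_nat n) e). ring.
 intros; apply H3; lia. intros; apply H3; unfold d in *; lia. Qed.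

Lemma Zsum_range_zsum f a b : Zsum_range f a b = zsum f a (S (Z.to_nat (b - a))).
Proof. unfold Zsum_range, Zsum_from. generalize (Z.to_nat (b-a)). induction n; simpl.
 rewrite Rplus_0_l; reflexivity. rewrite IHn. simpl. ring. Qed.

Lemma Zterm_zsum f N : sum_f_R0 (Zterm f) N = zsum f (- Z.of_nat N)%Z (S (2 * N)).
Proof. induction N. simpl. replace (-0 + 0)%Z with 0%Z by lia. ring.
 replace (S (2 * S N)) with (S (S (S (2 * N)))) by lia.
 rewrite zsum_cons.
 replace (- Z.of_nat (S N) + 1)%Z with (- Z.of_nat N)%Z by lia.
 change (zsum f (- Z.of_nat N) (S (S (2 * N)))) with (zsum f (- Z.of_nat N) (S (2 * N)) + f (- Z.of_nat N + Z.of_nat (S (2 * N)))%Z).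
 rewrite <- IHN.
 change (sum_f_R0 (Zterm f) (S N)) with (sum_f_R0 (Zterm f) N + (f (Z.of_nat (S N)) + f (- Z.of_nat (S N))%Z)).
 replace (- Z.of_nat N + Z.of_nat (S (2 * N)))%Z with (Z.of_nat (S N)) by lia.
 ring. Qed.

Lemma argmax_nat (phi : nat -> R) L : exists m, (m <= L)%nat /\ (forall j, (j <= L)%nat -> phi j <= phi m)
  /\ (forall j, (j < m)%nat -> phi j < phi m).
Proof. induction L. exists 0%nat; split; [lia|split]. intros j Hj; replace j with 0%nat by lia; lra. intros; lia.
 destruct IHL as [m [H1 [H2 H3]]]. destruct (Rlt_le_dec (phi m) (phi (S L))).
 exists (S L); split; [lia|split]. intros j Hj. destruct (Nat.eq_dec j (S L)). subst; lra.
 pose proof (H2 j ltac:(lia)); lra. intros j Hj. pose proof (H2 j ltac:(lia)); lra.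
 exists m; split; [lia|split]; auto. intros j Hj. destruct (Nat.eq_dec j (S L)). subst; lra. apply H2; lia. Qed.

Lemma MPnat (phi : nat -> R) L : phi 0%nat <= 0 -> phi L <= 0 ->
  (forall k, (0 < k < L)%nat -> 0 < phi k -> 2 * phi k <= phi (k - 1)%nat + phi (k + 1)%nat) ->
  forall k, (k <= L)%nat -> phi k <= 0.
Proof. intros H0 HL H k Hk. destruct (argmax_nat phi L) as [m [H1 [H2 H3]]].
 destruct (Rle_dec (phi m) 0). pose proof (H2 k Hk); lra.
 exfalso. destruct (Nat.eq_dec m 0). subst; lra. destruct (Nat.eq_dec m L). subst; lra.
 pose proof (H m ltac:(lia) ltac:(lra)). pose proof (H3 (m-1)%nat ltac:(lia)). pose proof (H2 (m+1)%nat ltac:(lia)). lra. Qed.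

Lemma MPZ (phi : Z -> R) A B : (A < B)%Z -> phi A <= 0 -> phi B <= 0 ->
  (forall i, (A < i < B)%Z -> 0 < phi i -> 2 * phi i <= phi (i - 1)%Z + phi (i + 1)%Z) ->
  forall i, (A <= i <= B)%Z -> phi i <= 0.
Proof. intros HAB H0 H1 H i Hi.
 pose (psi := fun k : nat => phi (A + Z.of_nat k)%Z).
 replace i with (A + Z.of_nat (Z.to_nat (i - A)))%Z by lia.
 apply (MPnat psi (Z.to_nat (B - A))); unfold psi.
 replace (A + Z.of_nat 0)%Z with A by lia; auto.
 replace (A + Z.of_nat (Z.to_nat (B - A)))%Z with B by lia; auto.
 intros k Hk Hp. replace (A + Z.of_nat (k-1))%Z with (A + Z.of_nat k - 1)%Z by lia.
 replace (A + Z.of_nat (k+1))%Z with (A + Z.of_nat k + 1)%Z by lia. apply H; auto. lia. lia. Qed.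
Definition d0 (i : Z) : R := if Z.eq_dec i 0 then 1 else 0.
Definition G r N i := sum_f_R0 (fun t => Defs.pre r t i) N.

Lemma pre_nonneg r : (forall i, 0 <= r i <= 1) -> forall t i, 0 <= Defs.pre r t i.
Proof. intros Hr t; induction t; intros i; simpl. destruct Z.eq_dec; lra.
 pose proof (IHt (i-1)%Z); pose proof (IHt (i+1)%Z); pose proof (Hr (i-1)%Z); pose proof (Hr (i+1)%Z).
 assert (0 <= Defs.pre r t (i - 1) * (1 - r (i - 1)%Z)) by (apply Rmult_le_pos; lra).
 assert (0 <= Defs.pre r t (i + 1) * (1 - r (i + 1)%Z)) by (apply Rmult_le_pos; lra). lra. Qed.

Lemma pre_supp A B r : (A < 0 < B)%Z -> (forall i, (i <= A \/ B <= i)%Z -> r i = 1) ->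
  forall t i, (i < A \/ B < i)%Z -> Defs.pre r t i = 0.
Proof. intros HAB Hr t; induction t; intros i Hi; simpl. destruct Z.eq_dec; [lia|auto].
 destruct Hi.
 rewrite (IHt (i-1)%Z) by lia. rewrite (Hr (i+1)%Z) by lia. ring.
 rewrite (IHt (i+1)%Z) by lia. rewrite (Hr (i-1)%Z) by lia. ring. Qed.

Lemma G_S r N i : G r (S N) i = d0 i + / 2 * (G r N (i-1)%Z * (1 - r (i-1)%Z) + G r N (i+1)%Z * (1 - r (i+1)%Z)).
Proof. unfold G. induction N.
 - reflexivity.
 - change (sum_f_R0 (fun t => Defs.pre r t i) (S (S N))) with (sum_f_R0 (fun t => Defs.pre r t i) (S N) + Defs.pre r (S (S N)) i).
   rewrite IHN. change (Defs.pre r (S (S N)) i) with (/ 2 * (Defs.pre r (S N) (i - 1)%Z * (1 - r (i - 1)%Z) + Defs.pre r (S N) (i + 1)%Z * (1 - r (i + 1)%Z))).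
   change (sum_f_R0 (fun t => Defs.pre r t (i-1)%Z) (S N)) with (sum_f_R0 (fun t => Defs.pre r t (i-1)%Z) N + Defs.pre r (S N) (i-1)%Z).
   change (sum_f_R0 (fun t => Defs.pre r t (i+1)%Z) (S N)) with (sum_f_R0 (fun t => Defs.pre r t (i+1)%Z) N + Defs.pre r (S N) (i+1)%Z).
   ring. Qed.

Lemma G_nonneg r : (forall i, 0 <= r i <= 1) -> forall N i, 0 <= G r N i.
Proof. intros Hr N i; unfold G; induction N. apply (pre_nonneg r Hr 0 i).
 rewrite tech5; cbv beta. pose proof (pre_nonneg r Hr (S N) i); lra. Qed.

Lemma G_grow r : (forall i, 0 <= r i <= 1) -> forall i, Un_growing (fun N => G r N i).
Proof. intros Hr i N. unfold G; rewrite tech5; cbv beta. pose proof (pre_nonneg r Hr (S N) i); lra. Qed.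

Lemma G_supp A B r : (A < 0 < B)%Z -> (forall i, (i <= A \/ B <= i)%Z -> r i = 1) ->
  forall N i, (i < A \/ B < i)%Z -> G r N i = 0.
Proof. intros HAB Hr N i Hi; unfold G; induction N. apply (pre_supp A B r HAB Hr); auto.
 rewrite tech5; cbv beta. rewrite (pre_supp A B r HAB Hr); auto; lra. Qed.

Lemma G_bound A B r : (A < 0 < B)%Z -> (forall i, 0 <= r i <= 1) -> (forall i, (i <= A \/ B <= i)%Z -> r i = 1) ->
  forall N i, G r N i <= 1 + (IZR B - IZR A) * (IZR B - IZR A).
Proof. intros HAB Hr Hr1 N.
 set (C := (IZR B - IZR A) * (IZR B - IZR A)).
 set (H := fun j => G r N j * (1 - r j)).
 assert (Hstep : forall i, H i <= d0 i + / 2 * (H (i-1)%Z + H (i+1)%Z)).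
 { intros i. unfold H. pose proof (G_grow r Hr i N). simpl in H0. rewrite G_S in H0.
   pose proof (G_nonneg r Hr N i). pose proof (Hr i).
   assert (G r N i * (1 - r i) <= G r N i) by nra. lra. }
 set (psi := fun j => (IZR j - IZR A) * (IZR B - IZR j)).
 assert (Hle : forall i, (A <= i <= B)%Z -> H i - psi i <= 0).
 { apply (MPZ (fun i => H i - psi i) A B). lia.
   unfold H, psi; rewrite Hr1 by lia; lra. unfold H, psi; rewrite Hr1 by lia; lra.
   intros i Hi _. pose proof (Hstep i). unfold psi. rewrite !minus_IZR, !plus_IZR.
   assert (d0 i <= 1) by (unfold d0; destruct Z.eq_dec; lra). unfold psi in *. lra. }
 assert (HC0 : 0 <= C) by (unfold C; apply Rle_0_sqr).
 assert (HC : forall j, H j <= C).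
 { intros j. destruct (Z_le_dec A j); destruct (Z_le_dec j B).
   - pose proof (Hle j ltac:(lia)). unfold psi in H0.
     assert (IZR A <= IZR j) by (apply IZR_le; lia). assert (IZR j <= IZR B) by (apply IZR_le; lia).
     unfold C; nra.
   - unfold H; rewrite Hr1 by lia. rewrite Rminus_diag, Rmult_0_r. apply HC0.
   - unfold H; rewrite Hr1 by lia. rewrite Rminus_diag, Rmult_0_r. apply HC0.
   - lia. }
 intros i. pose proof (G_grow r Hr i N). simpl in H0. rewrite G_S in H0.
 fold (H (i-1)%Z) (H (i+1)%Z) in H0. pose proof (HC (i-1)%Z). pose proof (HC (i+1)%Z).
 assert (d0 i <= 1) by (unfold d0; destruct Z.eq_dec; lra). lra. Qed.

Lemma G_cv A B r : (A < 0 < B)%Z -> (forall i, 0 <= r i <= 1) -> (forall i, (i <= A \/ B <= i)%Z -> r i = 1) ->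
  forall i, {l | Un_cv (fun N => G r N i) l}.
Proof. intros HAB Hr Hr1 i. apply growing_cv. apply G_grow; auto.
 exists (1 + (IZR B - IZR A) * (IZR B - IZR A)). intros x [n ->]. apply (G_bound A B r); auto. Qed.

Lemma cv_ext U V l : (forall n, U n = V n) -> Un_cv U l -> Un_cv V l.
Proof. intros H Hc eps He. destruct (Hc eps He) as [N HN]. exists N; intros n Hn. rewrite <- H; auto. Qed.
Lemma cv_const c : Un_cv (fun _ => c) c.
Proof. intros eps He; exists 0%nat; intros; unfold Rdist; rewrite Rminus_diag, Rabs_R0; lra. Qed.
Lemma cv_shift U l : Un_cv U l -> Un_cv (fun n => U (S n)) l.
Proof. intros Hc eps He. destruct (Hc eps He) as [N HN]. exists N; intros n Hn. apply HN; lia. Qed.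
Lemma cv_le U l c : Un_cv U l -> (forall n, U n <= c) -> l <= c.
Proof. intros Hc H. destruct (Rle_dec l c); auto. exfalso.
 destruct (Hc (l - c)) as [N HN]. lra. specialize (HN N (le_n _)). specialize (H N).
 unfold Rdist in HN. rewrite Rabs_left1 in HN by lra. lra. Qed.

Lemma g_eq r g : (forall i, Un_cv (fun N => G r N i) (g i)) ->
  forall i, g i = d0 i + / 2 * (g (i-1)%Z * (1 - r (i-1)%Z) + g (i+1)%Z * (1 - r (i+1)%Z)).
Proof. intros Hg i. apply (UL_sequence (fun N => G r (S N) i)). apply (cv_shift (fun N => G r N i)); auto.
 apply (cv_ext (fun N => d0 i + / 2 * (G r N (i-1)%Z * (1 - r (i-1)%Z) + G r N (i+1)%Z * (1 - r (i+1)%Z))) (fun N => G r (S N) i)).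
 intros; symmetry; apply G_S.
 apply CV_plus. apply cv_const. apply CV_mult. apply cv_const.
 apply CV_plus; apply CV_mult; auto; apply cv_const. Qed.

Lemma stopped_sum r N i : sum_f_R0 (fun t => stopped r t i) N = G r N i * r i.
Proof. unfold G, stopped; induction N. reflexivity. rewrite !tech5; cbv beta. rewrite IHN; ring. Qed.

Lemma zsum_ext f g a n : (forall j, f j = g j) -> zsum f a n = zsum g a n.
Proof. intros H; apply zsum_ext_in; intros; apply H. Qed.

Lemma mu_supp A B mu : (A < 0 < B)%Z -> M0 mu -> Zsum_range mu A B = 1 ->
  forall i, (i < A \/ B < i)%Z -> mu i = 0.
Proof. intros HAB [Hm0 [Hm1 _]] Hs i Hi.
 rewrite Zsum_range_zsum in Hs. set (n := S (Z.to_nat (B - A))) in *.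
 assert (Hg : Un_growing (sum_f_R0 (Zterm mu))).
 { intros N. rewrite tech5. change (Zterm mu (S N)) with (mu (Z.of_nat (S N)) + mu (- Z.of_nat (S N))%Z).
   pose proof (Hm0 (Z.of_nat (S N))); pose proof (Hm0 (- Z.of_nat (S N))%Z). lra. }
 set (N := Z.to_nat (Z.abs A + Z.abs B + Z.abs i)).
 pose proof (growing_ineq _ _ Hg Hm1 N) as HN. rewrite Zterm_zsum in HN.
 set (f1 := fun j => if Z_le_dec A j then if Z_le_dec j B then mu j else 0 else 0).
 assert (E : zsum mu (- Z.of_nat N) (S (2 * N)) = zsum f1 (- Z.of_nat N) (S (2 * N)) + zsum (fun j => mu j - f1 j) (- Z.of_nat N) (S (2 * N))).
 { rewrite <- zsum_plus. apply zsum_ext; intros; ring. }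
 rewrite (zsum_window f1 _ _ A n) in E.
 2: unfold N; lia. 2: unfold N, n; lia.
 2: { intros j Hj. unfold f1. destruct (Z_le_dec A j); destruct (Z_le_dec j B); auto; unfold n in Hj; lia. }
 rewrite (zsum_ext_in f1 mu) in E. 2: { intros k Hk. unfold f1. destruct (Z_le_dec A (A + Z.of_nat k)); destruct (Z_le_dec (A + Z.of_nat k) B); auto; unfold n in Hk; lia. }
 pose proof (zsum_ge_term (fun j => mu j - f1 j) (- Z.of_nat N) (S (2 * N)) (Z.to_nat (i + Z.of_nat N))) as T.
 replace (- Z.of_nat N + Z.of_nat (Z.to_nat (i + Z.of_nat N)))%Z with i in T by (unfold N; lia).
 assert (f1 i = 0) by (unfold f1; destruct (Z_le_dec A i); destruct (Z_le_dec i B); auto; lia).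
 assert (mu i - f1 i <= zsum (fun j => mu j - f1 j) (- Z.of_nat N) (S (2 * N))).
 { apply T. intros j. unfold f1. destruct (Z_le_dec A j); destruct (Z_le_dec j B); pose proof (Hm0 j); lra. unfold N; lia. }
 pose proof (Hm0 i). lra. Qed.

Lemma mu_mean A B mu : (A < 0 < B)%Z -> M0 mu -> Zsum_range mu A B = 1 ->
  zsum (fun j => IZR j * mu j) A (S (Z.to_nat (B - A))) = 0.
Proof. intros HAB Hm Hs. pose proof (mu_supp A B mu HAB Hm Hs) as Hsp.
 destruct Hm as [_ [_ [_ Hmean]]].
 apply (UL_sequence (sum_f_R0 (Zterm (fun i => IZR i * mu i)))); auto.
 intros eps He. exists (Z.to_nat (Z.abs A + Z.abs B)). intros m Hm.
 rewrite Zterm_zsum. rewrite (zsum_window _ _ _ A (S (Z.to_nat (B - A)))).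
 unfold Rdist; rewrite Rminus_diag, Rabs_R0; lra. lia. lia.
 intros j Hj. rewrite Hsp by lia. ring. Qed.

Lemma abs_lap x : IZR (Z.abs (x+1)) + IZR (Z.abs (x-1)) = 2 * IZR (Z.abs x) + (if Z.eq_dec x 0 then 2 else 0).
Proof. destruct Z.eq_dec. subst. simpl. lra.
 assert (Z.abs (x+1) + Z.abs (x-1) = 2 * Z.abs x)%Z by lia.
 rewrite <- plus_IZR, H, mult_IZR. simpl. ring. Qed.

Definition hpot A B mu i := zsum (fun j => mu j * IZR (Z.abs (j - i))) A (S (Z.to_nat (B - A))) - IZR (Z.abs i).

Lemma hpot_eq A B mu : (A < 0 < B)%Z -> (forall i, (i < A \/ B < i)%Z -> mu i = 0) ->
  forall i, hpot A B mu i + mu i = d0 i + / 2 * (hpot A B mu (i-1)%Z + hpot A B mu (i+1)%Z).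
Proof. intros HAB Hsp i. unfold hpot. set (n := S (Z.to_nat (B - A))).
 assert (E : forall j, mu j * IZR (Z.abs (j - (i-1))) + mu j * IZR (Z.abs (j - (i+1))) = 2 * (mu j * IZR (Z.abs (j - i))) + 2 * (mu j * (if Z.eq_dec j i then 1 else 0))).
 { intros j. pose proof (abs_lap (j - i)). replace (j - (i-1))%Z with (j - i + 1)%Z by lia.
   replace (j - (i+1))%Z with (j - i - 1)%Z by lia.
   destruct (Z.eq_dec j i); destruct (Z.eq_dec (j-i) 0); try lia; nra. }
 assert (Ind : zsum (fun j => mu j * (if Z.eq_dec j i then 1 else 0)) A n = mu i).
 { destruct (Z_le_dec A i); [destruct (Z_le_dec i B)|].
   - assert (i = A + Z.of_nat (Z.to_nat (i - A)))%Z by lia. rewrite H. apply zsum_indic. unfold n; lia.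
   - rewrite Hsp by lia. apply zsum_zero_in. intros k Hk. destruct Z.eq_dec; [unfold n in Hk; lia| ring].
   - rewrite Hsp by lia. apply zsum_zero_in. intros k Hk. destruct Z.eq_dec; [lia| ring]. }
 assert (S2 : zsum (fun j => mu j * IZR (Z.abs (j - (i-1)))) A n + zsum (fun j => mu j * IZR (Z.abs (j - (i+1)))) A n
   = 2 * zsum (fun j => mu j * IZR (Z.abs (j - i))) A n + 2 * mu i).
 { rewrite <- zsum_plus, (zsum_ext _ _ _ _ E), zsum_plus, !zsum_scal, Ind. ring. }
 pose proof (abs_lap i). unfold d0. destruct Z.eq_dec; lra. Qed.

Lemma hpot_zero A B mu : (A < 0 < B)%Z -> zsum mu A (S (Z.to_nat (B - A))) = 1 ->
  zsum (fun j => IZR j * mu j) A (S (Z.to_nat (B - A))) = 0 ->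
  forall i, (i <= A \/ B <= i)%Z -> hpot A B mu i = 0.
Proof. intros HAB Hm Hmean i Hi. unfold hpot. set (n := S (Z.to_nat (B - A))) in *.
 destruct Hi.
 - rewrite (zsum_ext_in _ (fun j => IZR j * mu j - IZR i * mu j)).
   rewrite zsum_minus, zsum_scal, Hm, Hmean. replace (Z.abs i) with (- i)%Z by lia. rewrite opp_IZR. ring.
   intros k Hk. replace (Z.abs (A + Z.of_nat k - i)) with (A + Z.of_nat k - i)%Z by lia. rewrite minus_IZR. ring.
 - rewrite (zsum_ext_in _ (fun j => IZR i * mu j - IZR j * mu j)).
   rewrite zsum_minus, zsum_scal, Hm, Hmean. replace (Z.abs i) with i by lia. ring.
   intros k Hk. replace (Z.abs (A + Z.of_nat k - i)) with (i - (A + Z.of_nat k))%Z by (unfold n in Hk; lia). rewrite minus_IZR. ring.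
Qed.

Lemma hpot_pos A B mu : (A < 0 < B)%Z -> (forall i, 0 <= mu i) -> zsum mu A (S (Z.to_nat (B - A))) = 1 ->
  zsum (fun j => IZR j * mu j) A (S (Z.to_nat (B - A))) = 0 -> 0 < mu A -> 0 < mu B ->
  forall i, (A < i < B)%Z -> 0 < hpot A B mu i.
Proof. intros HAB Hm0 Hm Hmean HA HB i Hi. unfold hpot. set (n := S (Z.to_nat (B - A))) in *.
 set (S1 := zsum (fun j => mu j * IZR (Z.abs (j - i))) A n).
 assert (T1 : zsum (fun j => mu j * (IZR (Z.abs (j - i)) - (IZR j - IZR i))) A n = S1 + IZR i).
 { rewrite (zsum_ext _ (fun j => mu j * IZR (Z.abs (j - i)) - (IZR j * mu j - IZR i * mu j))) by (intros; ring).
   rewrite zsum_minus, zsum_minus, zsum_scal, Hm, Hmean. unfold S1; ring. }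
 assert (T2 : zsum (fun j => mu j * (IZR (Z.abs (j - i)) + (IZR j - IZR i))) A n = S1 - IZR i).
 { rewrite (zsum_ext _ (fun j => mu j * IZR (Z.abs (j - i)) + (IZR j * mu j - IZR i * mu j))) by (intros; ring).
   rewrite zsum_plus, zsum_minus, zsum_scal, Hm, Hmean. unfold S1; ring. }
 assert (N1 : forall j, 0 <= mu j * (IZR (Z.abs (j - i)) - (IZR j - IZR i))).
 { intros j. apply Rmult_le_pos; auto. rewrite <- minus_IZR. assert (IZR (j - i) <= IZR (Z.abs (j-i))) by (apply IZR_le; lia). lra. }
 assert (N2 : forall j, 0 <= mu j * (IZR (Z.abs (j - i)) + (IZR j - IZR i))).
 { intros j. apply Rmult_le_pos; auto. rewrite <- minus_IZR, <- plus_IZR. apply IZR_le; lia. }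
 pose proof (zsum_ge_term _ A n 0 N1 ltac:(unfold n; lia)) as G1.
 pose proof (zsum_ge_term _ A n (Z.to_nat (B - A)) N2 ltac:(unfold n; lia)) as G2.
 replace (A + Z.of_nat 0)%Z with A in G1 by lia.
 replace (A + Z.of_nat (Z.to_nat (B - A)))%Z with B in G2 by lia.
 replace (Z.abs (A - i)) with (i - A)%Z in G1 by lia.
 replace (Z.abs (B - i)) with (B - i)%Z in G2 by lia.
 rewrite minus_IZR in G1, G2.
 assert (IZR A < IZR i) by (apply IZR_lt; lia). assert (IZR i < IZR B) by (apply IZR_lt; lia).
 assert (0 < mu A * (IZR i - IZR A - (IZR A - IZR i))) by (apply Rmult_lt_0_compat; lra).
 assert (0 < mu B * (IZR B - IZR i + (IZR B - IZR i))) by (apply Rmult_lt_0_compat; lra).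
 destruct (Z_le_dec 0 i).
 - replace (Z.abs i) with i by lia. lra.
 - replace (Z.abs i) with (- i)%Z by lia. rewrite opp_IZR. lra.
Qed.

Theorem proposition1 (A B : Z) (mu : Z -> R)
  (hAB : (A < 0 < B)%Z)
  (hmu : M0 mu)
  (hsupp : Zsum_range mu A B = 1)
  (hA : 0 < mu A) (hB : 0 < mu B) :
  exists rmax : Z -> R,
    in_R_mu A B mu rmax /\
    (forall r, in_R_mu A B mu r -> forall i, r i <= rmax i) /\
    in_SEP rmax mu.
Proof.
 pose proof (proj1 hmu) as Hm0.
 pose proof (mu_supp A B mu hAB hmu hsupp) as Hsp.
 pose proof (mu_mean A B mu hAB hmu hsupp) as Hmean.
 pose proof hsupp as Hmass. rewrite Zsum_range_zsum in Hmass.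
 pose proof (hpot_eq A B mu hAB Hsp) as Hheq.
 pose proof (hpot_zero A B mu hAB Hmass Hmean) as Hh0.
 pose proof (hpot_pos A B mu hAB Hm0 Hmass Hmean hA hB) as Hhp.
 set (h := hpot A B mu) in *.
 set (rmax := fun i => if Z_lt_dec A i then if Z_lt_dec i B then mu i / (h i + mu i) else 1 else 1).
 assert (R2 : forall i, (i <= A \/ B <= i)%Z -> rmax i = 1).
 { intros i Hi. unfold rmax. destruct (Z_lt_dec A i); auto. destruct (Z_lt_dec i B); auto. lia. }
 assert (RI : forall i, (A < i < B)%Z -> rmax i = mu i / (h i + mu i)).
 { intros i Hi. unfold rmax. destruct (Z_lt_dec A i); [|lia]. destruct (Z_lt_dec i B); [auto|lia]. }
 assert (R1 : forall i, 0 <= rmax i <= 1 /\ ((A < i < B)%Z -> rmax i < 1)).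
 { intros i. destruct (Z_lt_dec A i); [destruct (Z_lt_dec i B)|].
   - rewrite RI by lia. pose proof (Hhp i ltac:(lia)). pose proof (Hm0 i).
     split; [split|]; intros.
     apply Rmult_le_pos; [lra| left; apply Rinv_0_lt_compat; lra].
     apply (Rmult_le_reg_r (h i + mu i)); [lra|]. unfold Rdiv; rewrite Rmult_assoc, Rinv_l; lra.
     apply (Rmult_lt_reg_r (h i + mu i)); [lra|]. unfold Rdiv; rewrite Rmult_assoc, Rinv_l; lra.
   - rewrite R2 by lia. split; [lra|intros; lia].
   - rewrite R2 by lia. split; [lra|intros; lia]. }
 assert (R4 : forall j, (h j + mu j) * (1 - rmax j) = h j /\ (h j + mu j) * rmax j = mu j).
 { intros j. destruct (Z_lt_dec A j); [destruct (Z_lt_dec j B)|].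
   - rewrite RI by lia. pose proof (Hhp j ltac:(lia)). pose proof (Hm0 j). split; field; lra.
   - rewrite R2 by lia. rewrite Hh0 by lia. split; ring.
   - rewrite R2 by lia. rewrite Hh0 by lia. split; ring. }
 assert (Hr01 : forall i, 0 <= rmax i <= 1) by (intros; apply R1).
 pose (g := fun i => proj1_sig (G_cv A B rmax hAB Hr01 R2 i)).
 assert (Hg : forall i, Un_cv (fun N => G rmax N i) (g i)) by (intros; unfold g; apply proj2_sig).
 pose proof (g_eq rmax g Hg) as Hgeq.
 (* g = h + mu *)
 set (z := fun j => (g j - (h j + mu j)) * (1 - rmax j)).
 assert (Hw : forall i, g i - (h i + mu i) = / 2 * (z (i-1)%Z + z (i+1)%Z)).
 { intros i. unfold z. rewrite Hgeq, Hheq. destruct (R4 (i-1)%Z) as [E1 _]. destruct (R4 (i+1)%Z) as [E2 _].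
   lra. }
 assert (Hz : forall i, z i = 0).
 { intros i. destruct (Z_le_dec A i); [destruct (Z_le_dec i B)|].
   - assert (Z1 : z i <= 0).
     { apply (MPZ z A B); try lia. unfold z; rewrite R2 by lia; lra. unfold z; rewrite R2 by lia; lra.
       intros k Hk Hp. pose proof (Hw k). destruct (R1 k) as [_ Hl]. specialize (Hl Hk).
       unfold z in *. pose proof (Hr01 k). nra. }
     assert (Z2 : - z i <= 0).
     { apply (MPZ (fun i => - z i) A B); try lia. unfold z; rewrite R2 by lia; lra. unfold z; rewrite R2 by lia; lra.
       intros k Hk Hp. pose proof (Hw k). destruct (R1 k) as [_ Hl]. specialize (Hl Hk).
       unfold z in *. pose proof (Hr01 k). nra. }
     lra.
   - unfold z; rewrite R2 by lia; ring.
   - unfold z; rewrite R2 by lia; ring. }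
 assert (Hgu : forall i, g i = h i + mu i).
 { intros i. pose proof (Hw i). rewrite !Hz in H. lra. }
 assert (Hhit : forall i, hit_prob_eq rmax i (mu i)).
 { intros i. unfold hit_prob_eq. change (Un_cv (fun N => sum_f_R0 (fun t => stopped rmax t i) N) (mu i)).
   destruct (R4 i) as [_ E]. rewrite <- E, <- Hgu.
   apply (cv_ext (fun N => G rmax N i * rmax i)). intros; symmetry; apply stopped_sum.
   apply CV_mult; auto. apply cv_const. }
 exists rmax. split; [|split].
 - split; [auto|split; [auto|]]. intros i Hi N. rewrite stopped_sum.
   destruct (R4 i) as [_ E]. rewrite <- E, <- Hgu. apply Rmult_le_compat_r. apply Hr01.
   apply (growing_ineq (fun N => G rmax N i)); [apply G_grow; auto | auto].
 - intros r [Hr Hrs] i. destruct Hrs as [Hr1 Hrle].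
   destruct (Z_lt_dec A i); [destruct (Z_lt_dec i B)|]; [| rewrite R2 by lia; apply Hr..].
   pose (gr := fun i => proj1_sig (G_cv A B r hAB Hr Hr1 i)).
   assert (Hgr : forall i, Un_cv (fun N => G r N i) (gr i)) by (intros; unfold gr; apply proj2_sig).
   pose proof (g_eq r gr Hgr) as Hgreq.
   assert (Hk : forall j, (A < j < B)%Z -> gr j * r j <= mu j).
   { intros j Hj. apply (cv_le (fun N => G r N j * r j)). apply CV_mult; auto; apply cv_const.
     intros N. rewrite <- stopped_sum. apply Hrle; auto. }
   set (v := fun j => gr j * (1 - r j)).
   assert (Hhv : h i - v i <= 0).
   { apply (MPZ (fun j => h j - v j) A B); try lia.
     unfold v; rewrite Hh0, Hr1 by lia; lra. unfold v; rewrite Hh0, Hr1 by lia; lra.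
     intros k Hk' _. pose proof (Hk k Hk'). pose proof (Hheq k). pose proof (Hgreq k). unfold v in *. lra. }
   rewrite RI by lia. pose proof (Hk i ltac:(lia)). pose proof (Hhp i ltac:(lia)). pose proof (Hm0 i). pose proof (Hr i).
   unfold v in Hhv.
   assert (mu i * (1 - r i) >= gr i * r i * (1 - r i)) by (apply Rmult_ge_compat_r; lra).
   assert (r i * (gr i * (1 - r i)) >= r i * h i) by (apply Rmult_ge_compat_l; lra).
   apply (Rmult_le_reg_r (h i + mu i)); [lra|]. unfold Rdiv; rewrite Rmult_assoc, Rinv_l by lra. nra.
 - split; auto. intros eps He. exists (IZR (B - A + 1)). intros t.
   rewrite Zsum_range_zsum. rewrite zsum_zero_in. lra.
   intros k Hk. destruct Rle_dec as [Hle|]; [|reflexivity].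
   assert (Hout : (- Z.of_nat t + Z.of_nat k < A \/ B < - Z.of_nat t + Z.of_nat k)%Z).
   { rewrite Rabs_Zabs in Hle. apply le_IZR in Hle. lia. }
   unfold stopped_proc_law. rewrite (pre_supp A B rmax hAB R2) by lia.
   rewrite sum_eq_R0. ring. intros s _. destruct (s <? t)%nat; [|reflexivity].
   unfold stopped. rewrite (pre_supp A B rmax hAB R2) by lia. ring.
Qed.
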